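(* Let $A$ be admissible and $\ell>0$ with $A(x)=A_\infty$ for all $x>\ell$. Let $\phi\in C_c^\infty(\mathbb{R})$ with $\operatorname{supp}\phi\subset(0,\infty)$ and let $u=u_\phi\in C^\infty([0,\infty)\times\mathbb{R})$ satisfy $\square_Au=0$ in $(0,\infty)\times\mathbb{R}$, $\partial_xu(0,t)=\phi(t)$ for $t\in\mathbb{R}$, and $u=0$ in $(0,\infty)\times(-\infty,0)$. Then there are constants $C,C'>0$ such that $$|u(0,t)-c(t)|\le Ce^{-C't}\quad\text{for all }t\in\mathbb{R},\qquad c(t):=-\frac{1}{A_\infty}\int_0^t\phi(s)\,ds.$$
   Context: A function $A:\mathbb{R}\to\mathbb{R}$ is admissible if $A\in C^\infty(\mathbb{R})$, $A>0$, and there are $x_+>x_->0$ and $A_\infty>0$ with $A(x)=1$ for $x<x_-$ and $A(x)=A_\infty$ for $x>x_+$. $\square_Au:=\partial_t^2u-\frac{1}{A(x)}\partial_x(A(x)\partial_xu)$. *)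

(* Defs.v *)
From Stdlib Require Import Reals.
From Coquelicot Require Import Coquelicot.
Open Scope R_scope.

Definition smooth1 (f : R -> R) : Prop :=
  forall (n : nat) (x : R), ex_derive (Derive_n f n) x.

Definition Dx (f : R -> R -> R) : R -> R -> R :=
  fun x t => Derive (fun y => f y t) x.
Definition Dt (f : R -> R -> R) : R -> R -> R :=
  fun x t => Derive (fun s => f x s) t.

(* Iterated mixed partial derivative: true = d/dx, false = d/dt. *)
Fixpoint pderiv (l : list bool) (f : R -> R -> R) : R -> R -> R :=
  match l with
  | nil => f
  | cons b l' => if b then Dx (pderiv l' f) else Dt (pderiv l' f)
  end.

Definition smooth2 (f : R -> R -> R) : Prop :=
  forall l : list bool,
    (forall x t, ex_derive (fun y => pderiv l f y t) x) /\
    (forall x t, ex_derive (fun s => pderiv l f x s) t) /\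
    (forall p : R * R, continuous (fun q : R * R => pderiv l f (fst q) (snd q)) p).

(* C^infinity on the closed half-space [0,oo) x R (x first, t second):
   restriction of a C^infinity function on R^2. *)
Definition smooth_half (u : R -> R -> R) : Prop :=
  exists U : R -> R -> R, smooth2 U /\ forall x t, 0 <= x -> U x t = u x t.

Definition admissible (A : R -> R) : Prop :=
  smooth1 A /\ (forall x, 0 < A x) /\
  exists xm xp Ainf : R, 0 < xm /\ xm < xp /\ 0 < Ainf /\
    (forall x, x < xm -> A x = 1) /\ (forall x, xp < x -> A x = Ainf).

Definition boxA (A : R -> R) (u : R -> R -> R) (x t : R) : R :=
  Dt (Dt u) x t - / A x * Derive (fun y => A y * Dx u y t) x.

Definition test_fun_pos (phi : R -> R) : Prop :=
  smooth1 phi /\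
  exists a b : R, 0 < a /\ a <= b /\ forall t, (t < a \/ b < t) -> phi t = 0.

(* Main.v *)
Require Import Defs.
From Stdlib Require Import Reals Lra Psatz.
From Coquelicot Require Import Coquelicot.
Open Scope R_scope.

Lemma loc2d_all (P : R -> R -> Prop) x y : (forall u v, P u v) -> locally_2d P x y.
Proof. intros H. exists (mkposreal 1 Rlt_0_1). intros; apply H. Qed.

Lemma c2d_swap f x y : continuity_2d_pt f x y -> continuity_2d_pt (fun u v => f v u) y x.
Proof. intros H eps. destruct (H eps) as [d Hd]. exists d. intros u v H1 H2. now apply Hd. Qed.

Lemma c2d_snd1 (g : R -> R) s x : continuity_pt g x -> continuity_2d_pt (fun _ y => g y) s x.
Proof. intros H. apply (continuity_1d_2d_pt_comp g (fun _ y => y)); auto. apply continuity_2d_pt_id2. Qed.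

Lemma c2d_to_cont2 f s x : continuity_2d_pt f s x -> continuous (fun y => f s y) x.
Proof.
  intros H. apply continuity_2d_pt_filterlim in H.
  apply (continuous_comp_2 (fun _ : R => s) (fun y : R => y) f).
  - apply continuous_const.
  - apply continuous_id.
  - exact H.
Qed.

Lemma dX U (HU : smooth2 U) l x t :
  is_derive (fun y => pderiv l U y t) x (pderiv (cons true l) U x t).
Proof. destruct (HU l) as [H1 _]. exact (Derive_correct _ _ (H1 x t)). Qed.

Lemma dT U (HU : smooth2 U) l x t :
  is_derive (fun s => pderiv l U x s) t (pderiv (cons false l) U x t).
Proof. destruct (HU l) as [_ [H1 _]]. exact (Derive_correct _ _ (H1 x t)). Qed.

Lemma c2 U (HU : smooth2 U) l x t : continuity_2d_pt (pderiv l U) x t.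
Proof. destruct (HU l) as [_ [_ H]]. apply continuity_2d_pt_filterlim. exact (H (x,t)). Qed.

Lemma c2s U (HU : smooth2 U) l s x : continuity_2d_pt (fun s x => pderiv l U x s) s x.
Proof. apply c2d_swap. apply c2; auto. Qed.

Lemma schwarzU U (HU : smooth2 U) x t :
  pderiv (cons true (cons false nil)) U x t = pderiv (cons false (cons true nil)) U x t.
Proof.
  apply (Schwarz U x t).
  - apply loc2d_all. intros u v. destruct (HU nil) as [H1 [H2 _]].
    destruct (HU (cons false nil)) as [H3 _]. destruct (HU (cons true nil)) as [_ [H4 _]].
    repeat split; [apply H1 | apply H2 | apply H3 | apply H4].
  - apply (c2 U HU (cons true (cons false nil))).
  - apply (c2 U HU (cons false (cons true nil))).
Qed.

Lemma ball_R (x e y : R) : ball x e y <-> Rabs (y - x) < e.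
Proof. unfold ball; simpl; unfold AbsRing_ball, abs, minus, plus, opp; simpl. tauto. Qed.

Lemma deriv_right_lim f x l : is_derive f x l ->
  filterlim (fun h => (f (x + h) - f x) / h) (at_right 0) (locally l).
Proof.
  intros H. apply is_derive_Reals in H.
  apply filterlim_locally. intros eps.
  destruct (H eps (cond_pos eps)) as [d Hd].
  exists d. intros h Hy Hy0. apply ball_R in Hy. apply ball_R.
  apply Hd. lra. replace h with (h - 0) by ring. exact Hy.
Qed.

Lemma loc_pos x : 0 < x -> locally x (fun y => 0 < y).
Proof. intros H. apply (open_gt 0 x H). Qed.

Lemma right_cont_eq (f : R -> R) a c : continuous f a -> (forall y, a < y -> f y = c) -> f a = c.
Proof.
  intros Hc Hy.
  apply (@filterlim_locally_unique _ _ _ (at_right a) (Proper_StrongProper _ (at_right_proper_filter a)) f).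
  - apply (filterlim_filter_le_1 (F := locally a) f). apply filter_le_within. exact Hc.
  - apply filterlim_ext_loc with (fun _ => c).
    + exists (mkposreal 1 Rlt_0_1). intros y _ H. symmetry. now apply Hy.
    + apply filterlim_const.
Qed.

Lemma deriv_loc_const (f : R -> R) x c : locally x (fun y => f y = c) -> Derive f x = 0.
Proof. intros H. rewrite (Derive_ext_loc f (fun _ => c)); auto using Derive_const. Qed.

Lemma wave_U (A : R -> R) u U :
  (forall x t, 0 <= x -> U x t = u x t) -> smooth2 U ->
  (forall x, ex_derive A x) -> (forall x, 0 < A x) ->
  (forall x t, 0 < x -> boxA A u x t = 0) ->
  forall x t, 0 < x ->
   A x * pderiv (cons false (cons false nil)) U x t =
   Derive A x * pderiv (cons true nil) U x t + A x * pderiv (cons true (cons true nil)) U x t.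
Proof.
  intros Heq HU HA HApos Hbox x t Hx.
  assert (E1 : Dt (Dt u) x t = pderiv (cons false (cons false nil)) U x t).
  { simpl. unfold Dt. apply Derive_ext. intros s. apply Derive_ext. intros s'.
    symmetry; apply Heq; lra. }
  assert (E2 : Derive (fun y => A y * Defs.Dx u y t) x =
     Derive A x * pderiv (cons true nil) U x t + A x * pderiv (cons true (cons true nil)) U x t).
  { rewrite (Derive_ext_loc _ (fun y => A y * Defs.Dx U y t)).
    - apply is_derive_unique.
      apply (is_derive_mult A (fun y => Defs.Dx U y t)).
      + apply Derive_correct, HA.
      + destruct (HU (cons true nil)) as [H1 _]. exact (Derive_correct _ _ (H1 x t)).
      + intros; apply Rmult_comm.
    - apply (filter_imp (fun y => 0 < y)); [|apply loc_pos; auto].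
      intros y Hy. f_equal. unfold Defs.Dx. apply Derive_ext_loc.
      apply (filter_imp (fun z => 0 < z)); [|apply loc_pos; auto].
      intros z Hz. symmetry. apply Heq. lra. }
  specialize (Hbox x t Hx). unfold boxA in Hbox. rewrite E1, E2 in Hbox.
  assert (HA0 := HApos x).
  set (S := Derive A x * pderiv (cons true nil) U x t + A x * pderiv (cons true (cons true nil)) U x t) in *.
  assert (pderiv (cons false (cons false nil)) U x t = / A x * S) by lra.
  rewrite H. field. lra.
Qed.

Lemma neu_U (phi : R -> R) u U :
  (forall x t, 0 <= x -> U x t = u x t) -> smooth2 U ->
  (forall t, filterlim (fun h => (u h t - u 0 t) / h) (at_right 0) (locally (phi t))) ->
  forall t, pderiv (cons true nil) U 0 t = phi t.
Proof.
  intros Heq HU Hn t.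
  apply (@filterlim_locally_unique _ _ _ (at_right 0) (Proper_StrongProper _ (at_right_proper_filter 0)) (fun h => (u h t - u 0 t) / h)).
  - apply filterlim_ext_loc with (fun h => (U (0 + h) t - U 0 t) / h).
    + exists (mkposreal 1 Rlt_0_1). intros h _ H. rewrite !Heq; try lra. f_equal; f_equal; f_equal; ring.
    + destruct (HU nil) as [H1 _].
      apply (deriv_right_lim (fun y => U y t)). exact (Derive_correct _ _ (H1 0 t)).
  - apply Hn.
Qed.

Lemma is_derive_cont (f : R -> R) x l : is_derive f x l -> continuous f x.
Proof. intros H. exact (ex_derive_continuous f x (ex_intro _ l H)). Qed.

Notation Ux U := (pderiv (cons true nil) U).
Notation Ut U := (pderiv (cons false nil) U).
Notation Uxx U := (pderiv (cons true (cons true nil)) U).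
Notation Utt U := (pderiv (cons false (cons false nil)) U).
Notation Utx U := (pderiv (cons true (cons false nil)) U).
Notation Uxt U := (pderiv (cons false (cons true nil)) U).

Lemma past_U U (Hpast : forall x t, 0 < x -> t < 0 -> U x t = 0) x t :
  0 < x -> t < 0 -> Ut U x t = 0 /\ Ux U x t = 0.
Proof.
  intros Hx Ht. split; simpl; unfold Dt, Defs.Dx.
  - apply deriv_loc_const with 0. apply (filter_imp (fun s => s < 0)).
    + intros s Hs. now apply Hpast.
    + apply (open_lt 0 t Ht).
  - apply deriv_loc_const with 0. apply (filter_imp (fun y => 0 < y)).
    + intros y Hy. now apply Hpast.
    + apply (open_gt 0 x Hx).
Qed.

Lemma diff_w U (HU : smooth2 U) a b :
  differentiable_pt_lim (fun p q => Ut U p q + Ux U p q) a b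
    (Utx U a b + Uxx U a b) (Utt U a b + Uxt U a b).
Proof.
  apply filterdiff_differentiable_pt_lim.
  apply (is_derive_filterdiff (fun p q => Ut U p q + Ux U p q) a b
          (fun p q => Utx U p q + Uxx U p q) (Utt U a b + Uxt U a b)).
  - apply filter_forall. intros [p q]; simpl.
    apply (is_derive_plus (fun z => Ut U z q) (fun z => Ux U z q)); apply dX; auto.
  - apply (is_derive_plus (fun z => Ut U a z) (fun z => Ux U a z)); apply dT; auto.
  - apply (proj1 (continuity_2d_pt_filterlim (fun p q => Utx U p q + Uxx U p q) a b)).
    apply continuity_2d_pt_plus; apply c2; auto.
Qed.

Lemma out_U (A : R -> R) U (Ainf l : R) (HU : smooth2 U)
  (Hwave : forall x t, 0 < x -> A x * Utt U x t = Derive A x * Ux U x t + A x * Uxx U x t)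
  (Hpast : forall x t, 0 < x -> t < 0 -> U x t = 0)
  (HApos : forall x, 0 < A x) (Hl : 0 < l) (HAl : forall x, l < x -> A x = Ainf) :
  forall x t, l <= x -> Ut U x t + Ux U x t = 0.
Proof.
  assert (Hgt : forall x0 t0, l < x0 -> Ut U x0 t0 + Ux U x0 t0 = 0).
  { intros x0 t0 Hx0.
    set (g := fun s => Ut U (x0 + s) (t0 - s) + Ux U (x0 + s) (t0 - s)).
    assert (Hd : forall s, 0 <= s -> is_derive g s 0).
    { intros s Hs. apply is_derive_Reals.
      assert (H := derivable_pt_lim_comp_2d (fun p q => Ut U p q + Ux U p q)
                (fun s => x0 + s) (fun s => t0 - s) s _ _ 1 (-1)
                (diff_w U HU (x0 + s) (t0 - s))).
      assert (H2 : derivable_pt_lim (fun s => x0 + s) s 1).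
      { apply is_derive_Reals. auto_derive; auto; ring. }
      assert (H3 : derivable_pt_lim (fun s => t0 - s) s (-1)).
      { apply is_derive_Reals. auto_derive; auto; ring. }
      specialize (H H2 H3). unfold g.
      replace 0 with ((Utx U (x0 + s) (t0 - s) + Uxx U (x0 + s) (t0 - s)) * 1 +
         (Utt U (x0 + s) (t0 - s) + Uxt U (x0 + s) (t0 - s)) * -1); [exact H|].
      rewrite (schwarzU U HU).
      assert (HA' : Derive A (x0 + s) = 0).
      { apply deriv_loc_const with Ainf. apply (filter_imp (fun y => l < y)).
        - intros y Hy; auto.
        - apply (open_gt l); lra. }
      assert (Hw := Hwave (x0 + s) (t0 - s) ltac:(lra)). rewrite HA' in Hw.
      assert (Hp := HApos (x0 + s)).
      assert (Utt U (x0 + s) (t0 - s) = Uxx U (x0 + s) (t0 - s)).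
      { apply (Rmult_eq_reg_l (A (x0 + s))); lra. }
      rewrite H0. ring. }
    set (S := Rabs t0 + 1).
    assert (HS : 0 < S) by (unfold S; pose proof (Rabs_pos t0); lra).
    destruct (MVT_gen g 0 S (fun _ => 0)) as [c [_ Hc]].
    - intros s Hs. apply Hd. rewrite Rmin_left in Hs; lra.
    - intros s Hs. apply continuity_pt_filterlim.
      assert (Hs' : 0 <= s) by (rewrite Rmin_left in Hs; lra).
      exact (ex_derive_continuous g s (ex_intro _ 0 (Hd s Hs'))).
    - assert (g S = 0).
      { unfold g. pose proof (Rle_abs t0).
        destruct (past_U U Hpast (x0 + S) (t0 - S)) as [E1 E2]; unfold S in *; try lra.
        }
      unfold g in Hc, H. replace (x0 + 0) with x0 in Hc by ring.
      replace (t0 - 0) with t0 in Hc by ring. lra. }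
  intros x t Hx. destruct (Rle_lt_or_eq_dec l x Hx) as [Hlt|Heq]; auto.
  subst x. apply (right_cont_eq (fun y => Ut U y t + Ux U y t) l 0).
  - eapply is_derive_cont.
    apply (is_derive_plus (fun z => Ut U z t) (fun z => Ux U z t)); apply dX; auto.
  - intros y Hy. now apply Hgt.
Qed.

Lemma exRInt_R (g : R -> R) a b : (forall z, continuous g z) -> ex_RInt g a b.
Proof. intros H. apply (@ex_RInt_continuous R_CompleteNormedModule). intros; apply H. Qed.

Lemma RInt_R (f : R -> R) a b v : is_RInt f a b v -> RInt f a b = v.
Proof. intros H. exact (@is_RInt_unique R_CompleteNormedModule f a b v H). Qed.

Lemma dRInt (f df : R -> R -> R) a b t :
  (forall s x, is_derive (fun s => f s x) s (df s x)) ->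
  (forall s x, continuity_2d_pt df s x) ->
  (forall s x, continuity_2d_pt f s x) ->
  is_derive (fun s => RInt (fun x => f s x) a b) t (RInt (fun x => df t x) a b).
Proof.
  intros Hd Hdc Hc.
  assert (E : RInt (fun x => df t x) a b = RInt (fun x => Derive (fun u => f u x) t) a b).
  { apply RInt_ext; intros; symmetry; apply is_derive_unique; auto. }
  rewrite E. apply is_derive_RInt_param.
  - apply filter_forall; intros; eexists; apply Hd.
  - intros; apply continuity_2d_pt_ext with df; [intros; symmetry; apply is_derive_unique; auto | auto].
  - apply filter_forall; intros y; apply exRInt_R; intros; apply c2d_to_cont2; auto.
Qed.

Ltac c2d_tac HU :=
  repeat first [ apply continuity_2d_pt_mult | apply continuity_2d_pt_plus
               | apply continuity_2d_pt_minus | apply continuity_2d_pt_opp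
               | apply continuity_2d_pt_const | apply (c2s _ HU)
               | apply c2d_snd1 ].

Ltac exd HU :=
  repeat split;
  try (first [ exact (proj1 (proj2 (HU nil)) _ _)
             | exact (proj1 (proj2 (HU (cons false nil))) _ _)
             | exact (proj1 (proj2 (HU (cons true nil))) _ _)
             | exact (proj1 (HU nil) _ _)
             | exact (proj1 (HU (cons false nil)) _ _)
             | exact (proj1 (HU (cons true nil)) _ _) ]).

Ltac dfin := simpl pderiv; unfold Dt, Defs.Dx; field.

Definition eint (A : R -> R) U s x := A x * (Ut U x s * Ut U x s + Ux U x s * Ux U x s) / 2.
Definition deint (A : R -> R) U s x := A x * (Ut U x s * Utt U x s + Ux U x s * Uxt U x s).
Definition Een A U l s := RInt (fun x => eint A U s x) 0 l.

Lemma dE (A : R -> R) (U : R -> R -> R) (l : R) (HU : smooth2 U) (HAc : forall x, continuity_pt A x) t :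
  is_derive (Een A U l) t (RInt (fun x => deint A U t x) 0 l).
Proof.
  apply dRInt.
  - intros s x. unfold eint, deint. auto_derive; [exd HU | dfin].
  - intros s x. unfold deint. c2d_tac HU; auto.
  - intros s x. unfold eint, Rdiv. c2d_tac HU; auto.
Qed.

Lemma ibpE (A : R -> R) (U : R -> R -> R) (l : R) (HU : smooth2 U) (HAd : forall x, ex_derive A x)
  (HA'c : forall x, continuity_pt (Derive A) x)
  (Hwave : forall x t, 0 < x -> A x * Utt U x t = Derive A x * Ux U x t + A x * Uxx U x t)
  (Hl : 0 < l) t :
  RInt (fun x => deint A U t x) 0 l = A l * Ux U l t * Ut U l t - A 0 * Ux U 0 t * Ut U 0 t.
Proof.
  assert (HAc : forall x, continuity_pt A x).
  { intros x. apply continuity_pt_filterlim. exact (ex_derive_continuous A x (HAd x)). }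
  set (dG := fun x => Derive A x * Ux U x t * Ut U x t + A x * Uxx U x t * Ut U x t
                      + A x * Ux U x t * Utx U x t).
  assert (H : is_RInt dG 0 l (minus (A l * Ux U l t * Ut U l t) (A 0 * Ux U 0 t * Ut U 0 t))).
  { apply (is_RInt_derive (fun x => A x * Ux U x t * Ut U x t)).
    - intros x _. unfold dG. auto_derive; [exd HU; apply HAd | change (Derive (fun x0 : R => A x0) x) with (Derive A x); dfin].
    - intros x _. unfold dG.
      apply (c2d_to_cont2 (fun s x => Derive A x * Ux U x s * Ut U x s + A x * Uxx U x s * Ut U x s
                      + A x * Ux U x s * Utx U x s) t x).
      c2d_tac HU; auto. }
  apply RInt_R in H. transitivity (RInt dG 0 l).
  2:{ rewrite H. unfold minus, plus, opp; simpl. ring. }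
  apply RInt_ext. intros x Hx. rewrite Rmin_left, Rmax_right in Hx; try lra.
  unfold deint, dG. rewrite (schwarzU U HU x t). match goal with |- ?a = ?b => change (@eq R a b) end.
  replace (A x * (Ut U x t * Utt U x t + Ux U x t * Uxt U x t))
    with (Ut U x t * (A x * Utt U x t) + A x * Ux U x t * Uxt U x t) by ring.
  rewrite (Hwave x t); [ring | lra].
Qed.

Definition mint (K : R) (A : R -> R) U s x := exp (K * x) * A x * Ut U x s * Ux U x s.
Definition dmint (K : R) (A : R -> R) U s x :=
  exp (K * x) * A x * (Utt U x s * Ux U x s + Ut U x s * Uxt U x s).
Definition Mfun K A U l s := RInt (fun x => mint K A U s x) 0 l.

Lemma dM (K : R) (A : R -> R) (U : R -> R -> R) (l : R) (HU : smooth2 U)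
  (HAc : forall x, continuity_pt A x) t :
  is_derive (Mfun K A U l) t (RInt (fun x => dmint K A U t x) 0 l).
Proof.
  assert (Hec : forall x, continuity_pt (fun x => exp (K * x)) x).
  { intros x. reg. }
  apply dRInt.
  - intros s x. unfold mint, dmint. auto_derive; [exd HU | dfin].
  - intros s x. unfold dmint.
    apply (continuity_2d_pt_mult (fun s x => exp (K * x) * A x)); [apply continuity_2d_pt_mult|]; c2d_tac HU; auto.
  - intros s x. unfold mint. c2d_tac HU; auto.
Qed.

Lemma alg1 e A A' K a b : 1 <= e -> 0 < A -> A + Rabs A' <= K * A ->
  A * (a * a + b * b) / 2 <= e * ((K * A + A') * a * a + (K * A - A') * b * b) / 2.
Proof.
  intros He HA HK.
  assert (H1 : A <= K * A + A') by (pose proof (Rle_abs (- A')); rewrite Rabs_Ropp in H; lra).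
  assert (H2 : A <= K * A - A') by (pose proof (Rle_abs A'); lra).
  assert (Ha : 0 <= a * a) by nra. assert (Hb : 0 <= b * b) by nra.
  assert (A * (a * a + b * b) <= (K * A + A') * a * a + (K * A - A') * b * b) by nra.
  assert (0 <= (K * A + A') * a * a + (K * A - A') * b * b) by nra.
  nra.
Qed.

Lemma exp_ge1 y : 0 <= y -> 1 <= exp y.
Proof. intros H. rewrite <- exp_0. destruct H as [H|H]; [left; apply exp_increasing; auto | subst; right; auto]. Qed.

Lemma Mineq (K : R) (A : R -> R) (U : R -> R -> R) (l : R) (HU : smooth2 U)
  (HAd : forall x, ex_derive A x)
  (HA'c : forall x, continuity_pt (Derive A) x)
  (Hwave : forall x t, 0 < x -> A x * Utt U x t = Derive A x * Ux U x t + A x * Uxx U x t)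
  (HApos : forall x, 0 < A x)
  (Hl : 0 < l) (HK0 : 0 <= K)
  (HK : forall x, 0 <= x <= l -> A x + Rabs (Derive A x) <= K * A x) t :
  RInt (fun x => dmint K A U t x) 0 l <=
    exp (K * l) * A l * (Ut U l t * Ut U l t + Ux U l t * Ux U l t) / 2
  - exp (K * 0) * A 0 * (Ut U 0 t * Ut U 0 t + Ux U 0 t * Ux U 0 t) / 2
  - Een A U l t.
Proof.
  assert (HAc : forall x, continuity_pt A x).
  { intros x. apply continuity_pt_filterlim. exact (ex_derive_continuous A x (HAd x)). }
  assert (Hec : forall x, continuity_pt (fun x => exp (K * x)) x) by (intros x; reg).
  set (dGM := fun x => K * exp (K * x) * A x * (Ut U x t * Ut U x t + Ux U x t * Ux U x t) / 2
     + exp (K * x) * Derive A x * (Ut U x t * Ut U x t + Ux U x t * Ux U x t) / 2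
     + exp (K * x) * A x * (Ut U x t * Utx U x t + Ux U x t * Uxx U x t)).
  assert (H : is_RInt dGM 0 l
     (minus (exp (K * l) * A l * (Ut U l t * Ut U l t + Ux U l t * Ux U l t) / 2)
            (exp (K * 0) * A 0 * (Ut U 0 t * Ut U 0 t + Ux U 0 t * Ux U 0 t) / 2))).
  { apply (is_RInt_derive (fun x => exp (K * x) * A x * (Ut U x t * Ut U x t + Ux U x t * Ux U x t) / 2)).
    - intros x _. unfold dGM. auto_derive; [exd HU; apply HAd | change (Derive (fun x0 : R => A x0) x) with (Derive A x); dfin].
    - intros x _. unfold dGM.
      apply (c2d_to_cont2 (fun s x => K * exp (K * x) * A x * (Ut U x s * Ut U x s + Ux U x s * Ux U x s) / 2
     + exp (K * x) * Derive A x * (Ut U x s * Ut U x s + Ux U x s * Ux U x s) / 2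
     + exp (K * x) * A x * (Ut U x s * Utx U x s + Ux U x s * Uxx U x s)) t x).
      unfold Rdiv. c2d_tac HU; auto. }
  assert (HE : is_RInt (fun x => eint A U t x) 0 l (Een A U l t)).
  { apply (@RInt_correct R_CompleteNormedModule). apply exRInt_R. intros z.
    apply (c2d_to_cont2 (eint A U) t z). unfold eint, Rdiv. c2d_tac HU; auto. }
  assert (H2 := is_RInt_minus _ _ _ _ _ _ H HE).
  assert (H3 := H2). apply RInt_R in H3.
  apply Rle_trans with (RInt (fun y => minus (dGM y) (eint A U t y)) 0 l).
  2:{ right. etransitivity; [apply H3|]. unfold minus, plus, opp; simpl. ring. }
  apply RInt_le; [lra| | |].
  - apply exRInt_R. intros z. apply (c2d_to_cont2 (dmint K A U) t z). unfold dmint.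
    apply (continuity_2d_pt_mult (fun s x => exp (K * x) * A x)); [apply continuity_2d_pt_mult|]; c2d_tac HU; auto.
  - eexists; exact H2.
  - intros x Hx. unfold dmint, dGM, eint. unfold minus, plus, opp; simpl.
    assert (Hs := schwarzU U HU x t). simpl in Hs. rewrite Hs.
    assert (Hw := Hwave x t ltac:(lra)). simpl in Hw.
    assert (He := exp_ge1 (K * x) ltac:(nra)).
    assert (Hal := alg1 (exp (K * x)) (A x) (Derive A x) K (Ut U x t) (Ux U x t) He (HApos x)
                    (HK x ltac:(lra))). simpl in Hal.
    assert (Hw' := f_equal (fun z => exp (K * x) * Defs.Dx U x t * z) Hw). simpl in Hw'.
    lra.
Qed.

Lemma dQ (A : R -> R) (U : R -> R -> R) (l : R) (HU : smooth2 U)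
  (HAc : forall x, continuity_pt A x) t :
  is_derive (fun s => RInt (fun x => A x * Ut U x s) 0 l) t (RInt (fun x => A x * Utt U x t) 0 l).
Proof.
  apply (dRInt (fun s x => A x * Ut U x s) (fun s x => A x * Utt U x s)).
  - intros s x. auto_derive; [exd HU | dfin].
  - intros s x. c2d_tac HU; auto.
  - intros s x. c2d_tac HU; auto.
Qed.

Lemma ibpQ (A : R -> R) (U : R -> R -> R) (l : R) (HU : smooth2 U) (HAd : forall x, ex_derive A x)
  (HA'c : forall x, continuity_pt (Derive A) x)
  (Hwave : forall x t, 0 < x -> A x * Utt U x t = Derive A x * Ux U x t + A x * Uxx U x t)
  (Hl : 0 < l) t :
  RInt (fun x => A x * Utt U x t) 0 l = A l * Ux U l t - A 0 * Ux U 0 t.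
Proof.
  assert (HAc : forall x, continuity_pt A x).
  { intros x. apply continuity_pt_filterlim. exact (ex_derive_continuous A x (HAd x)). }
  set (dG := fun x => Derive A x * Ux U x t + A x * Uxx U x t).
  assert (H : is_RInt dG 0 l (minus (A l * Ux U l t) (A 0 * Ux U 0 t))).
  { apply (is_RInt_derive (fun x => A x * Ux U x t)).
    - intros x _. unfold dG. auto_derive; [exd HU; apply HAd | change (Derive (fun x0 : R => A x0) x) with (Derive A x); dfin].
    - intros x _. unfold dG.
      apply (c2d_to_cont2 (fun s x => Derive A x * Ux U x s + A x * Uxx U x s) t x).
      c2d_tac HU; auto. }
  apply RInt_R in H. transitivity (RInt dG 0 l).
  2:{ etransitivity; [apply H|]. unfold minus, plus, opp; simpl. ring. }
  apply RInt_ext. intros x Hx. rewrite Rmin_left, Rmax_right in Hx; try lra.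
  unfold dG. match goal with |- ?a = ?b => change (@eq R a b) end.
  apply Hwave; lra.
Qed.

Lemma eint_cont (A : R -> R) U (HU : smooth2 U) (HAc : forall x, continuity_pt A x) t z :
  continuous (fun x => eint A U t x) z.
Proof. apply (c2d_to_cont2 (eint A U) t z). unfold eint, Rdiv. c2d_tac HU; auto. Qed.

Lemma E_nonneg (A : R -> R) U l (HU : smooth2 U) (HAc : forall x, continuity_pt A x)
  (HApos : forall x, 0 < A x) (Hl : 0 < l) t : 0 <= Een A U l t.
Proof.
  apply RInt_ge_0; [lra | apply exRInt_R; intros; apply eint_cont; auto |].
  intros x _. unfold eint. specialize (HApos x).
  assert (0 <= Ut U x t * Ut U x t + Ux U x t * Ux U x t) by nra. 
  apply Rmult_le_pos; [|lra]. nra.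
Qed.

Lemma absbound e E A a b : 0 < e -> e <= E -> 0 < A ->
  Rabs (e * A * a * b) <= E * (A * (a * a + b * b) / 2).
Proof.
  intros He HE HA. pose proof (Rle_0_sqr (a - b)) as H. pose proof (Rle_0_sqr (a + b)) as H0.
  pose proof (Rle_0_sqr a) as Ha. pose proof (Rle_0_sqr b) as Hb. unfold Rsqr in *.
  assert (HeA : 0 <= e * A) by (apply Rmult_le_pos; lra).
  assert (G1 := Rmult_le_pos _ _ HeA H). assert (G2 := Rmult_le_pos _ _ HeA H0).
  assert (G3 : 0 <= (E - e) * (A * (a * a + b * b))).
  { apply Rmult_le_pos; [lra|]. apply Rmult_le_pos; lra. }
  destruct (Rle_or_lt 0 (e * A * a * b)) as [Hp|Hn];
    [rewrite Rabs_pos_eq by lra | rewrite Rabs_left by lra]; lra.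
Qed.

Lemma M_bound (K : R) (A : R -> R) U l (HU : smooth2 U) (HAc : forall x, continuity_pt A x)
  (HApos : forall x, 0 < A x) (Hl : 0 < l) (HK0 : 0 <= K) t :
  Rabs (Mfun K A U l t) <= exp (K * l) * Een A U l t.
Proof.
  assert (Hec : forall x, continuity_pt (fun x => exp (K * x)) x) by (intros x; reg).
  assert (Hmc : forall z, continuous (fun x => mint K A U t x) z).
  { intros z. apply (c2d_to_cont2 (mint K A U) t z). unfold mint. c2d_tac HU; auto. }
  unfold Mfun. eapply Rle_trans. apply abs_RInt_le; [lra | apply exRInt_R; auto].
  assert (HE : is_RInt (fun x => eint A U t x) 0 l (Een A U l t)).
  { apply (@RInt_correct R_CompleteNormedModule). apply exRInt_R. intros z. apply eint_cont; auto. }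
  assert (H2 := is_RInt_scal _ _ _ (exp (K * l)) _ HE). apply RInt_R in H2.
  apply Rle_trans with (RInt (fun x => scal (exp (K * l)) (eint A U t x)) 0 l).
  2:{ right. etransitivity; [apply H2|]. reflexivity. }
  apply RInt_le; [lra| | |].
  - apply exRInt_R. intros z. apply (continuous_comp _ Rabs); auto. apply continuous_Rabs.
  - apply exRInt_R. intros z. apply (continuous_scal_r (exp (K * l)) (fun x => eint A U t x)).
    apply eint_cont; auto.
  - intros x Hx. unfold mint, eint. unfold scal; simpl. unfold mult; simpl.
    replace (A x * (Ut U x t * Ut U x t + Ux U x t * Ux U x t) / 2) with
      (A x * (Ut U x t * Ut U x t + Ux U x t * Ux U x t) / 2) by ring.
    apply absbound; auto. apply exp_pos. 
    destruct (Rle_lt_or_eq_dec (K * x) (K * l) ltac:(nra)) as [Hlt|Heq];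
      [left; apply exp_increasing; auto | rewrite Heq; right; auto].
Qed.

Lemma nonincr (h dh : R -> R) b t : (forall s, is_derive h s (dh s)) ->
  (forall s, b <= s -> dh s <= 0) -> b <= t -> h t <= h b.
Proof.
  intros Hd Hn Hbt. destruct (MVT_gen h b t dh) as [c [Hc Heq]].
  - intros; apply Hd.
  - intros; apply continuity_pt_filterlim; eapply is_derive_cont; apply Hd.
  - rewrite Rmin_left, Rmax_right in Hc by lra.
    assert (dh c <= 0) by (apply Hn; lra). nra.
Qed.

Lemma exp_mono x y : x <= y -> exp x <= exp y.
Proof. intros [H|H]; [left; apply exp_increasing; auto | subst; right; auto]. Qed.

Lemma exp_inv x : exp x * exp (- x) = 1.
Proof. rewrite <- exp_plus. replace (x + - x) with 0 by ring. apply exp_0. Qed.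

Lemma abstract_decay (E M dE dM : R -> R) (c b : R) :
  (forall t, is_derive E t (dE t)) -> (forall t, is_derive M t (dM t)) ->
  (forall t, 0 <= E t) -> (forall t, Rabs (M t) <= c * E t) -> 0 < c ->
  (forall t, b < t -> dE t + / (2 * c) * dM t <= - (/ (2 * c)) * E t) ->
  (forall t, t < 0 -> E t = 0) -> 0 <= b ->
  exists k Bc, 0 < k /\ 0 <= Bc /\ forall t, E t <= Bc * exp (- k * t).
Proof.
  intros HdE HdM HE0 HM Hc Hder Hneg Hb.
  set (eps := / (2 * c)).
  assert (Heps : 0 < eps) by (unfold eps; apply Rinv_0_lt_compat; lra).
  assert (Hepsc : eps * c = / 2) by (unfold eps; field; lra).
  set (F := fun t => E t + eps * M t).
  assert (HF1 : forall t, E t / 2 <= F t).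
  { intros t. unfold F. specialize (HM t). apply Rabs_le_between in HM.
    assert (eps * M t >= - (eps * c * E t)) by nra. rewrite Hepsc in H. lra. }
  assert (HF2 : forall t, F t <= 3 * E t / 2).
  { intros t. unfold F. specialize (HM t). apply Rabs_le_between in HM.
    assert (eps * M t <= eps * c * E t) by nra. rewrite Hepsc in H. lra. }
  set (k := 2 / 3 * eps).
  assert (Hk : 0 < k) by (unfold k; lra).
  set (h := fun t => F t * exp (k * t)).
  set (dh := fun t => (dE t + eps * dM t + k * F t) * exp (k * t)).
  assert (Hdh : forall t, is_derive h t (dh t)).
  { intros t. unfold h, dh, F. auto_derive.
    - split; [eexists; apply HdE | split; [eexists; apply HdM | auto]].
    - replace (Derive (fun x : R => E x) t) with (dE t) by (symmetry; apply is_derive_unique; apply HdE).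
      replace (Derive (fun x : R => M x) t) with (dM t) by (symmetry; apply is_derive_unique; apply HdM). ring. }
  set (b0 := b + 1).
  assert (Hdhneg : forall s, b0 <= s -> dh s <= 0).
  { intros s Hs. unfold dh. specialize (Hder s ltac:(unfold b0 in Hs; lra)). fold eps in Hder.
    assert (k * F s <= eps * E s) by (specialize (HF2 s); unfold k; nra).
    assert (0 < exp (k * s)) by apply exp_pos. nra. }
  assert (Hdec : forall t, b0 <= t -> E t <= 2 * h b0 * exp (- k * t)).
  { intros t Ht. assert (Hh := nonincr h dh b0 t Hdh Hdhneg Ht).
    assert (Ft : F t = h t * exp (- k * t)).
    { unfold h. rewrite Rmult_assoc. replace (- k * t) with (- (k * t)) by ring. rewrite exp_inv. ring. }
    specialize (HF1 t). assert (0 < exp (- k * t)) by apply exp_pos. nra. }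
  assert (HEc : forall c, continuity_pt E c).
  { intros c0. apply continuity_pt_filterlim. eapply is_derive_cont. apply HdE. }
  destruct (continuity_ab_maj E 0 b0 ltac:(unfold b0; lra) (fun c0 _ => HEc c0)) as [mx [Hmx Hmxb]].
  assert (Hhb0 : 0 <= h b0).
  { unfold h. specialize (HF1 b0). specialize (HE0 b0). assert (0 < exp (k * b0)) by apply exp_pos. nra. }
  exists k, (Rmax (2 * h b0) (E mx * exp (k * b0))). split; [auto|split].
  - apply Rle_trans with (2 * h b0); [lra | apply Rmax_l].
  - intros t. assert (Hex : 0 < exp (- k * t)) by apply exp_pos.
    destruct (Rlt_or_le t 0) as [Ht|Ht].
    + rewrite (Hneg t Ht). apply Rmult_le_pos; [|lra].
      apply Rle_trans with (2 * h b0); [lra | apply Rmax_l].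
    + destruct (Rle_or_lt t b0) as [Ht2|Ht2].
      * apply Rle_trans with (E mx * exp (k * b0) * exp (- k * t)).
        -- assert (Hm := Hmx t (conj Ht Ht2)).
           assert (exp (- k * b0) <= exp (- k * t)) by (apply exp_mono; nra).
           assert (Hi := exp_inv (k * b0)). replace (- (k * b0)) with (- k * b0) in Hi by ring.
           assert (0 <= E mx) by apply HE0. assert (0 < exp (k * b0)) by apply exp_pos.
           apply Rle_trans with (E mx); [exact Hm|].
           apply Rle_trans with (E mx * exp (k * b0) * exp (- k * b0)); [rewrite Rmult_assoc, Hi; lra|].
           apply Rmult_le_compat_l; [apply Rmult_le_pos; lra | auto].
        -- apply Rmult_le_compat_r; [lra | apply Rmax_r].
      * apply Rle_trans with (2 * h b0 * exp (- k * t)); [apply Hdec; lra|].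
        apply Rmult_le_compat_r; [lra | apply Rmax_l].
Qed.

Lemma amgm d p : 0 < d -> Rabs p <= (d * (p * p) + / d) / 2.
Proof.
  intros Hd. assert (H := Rle_0_sqr (d * Rabs p - 1)). unfold Rsqr in H.
  assert (Hp : Rabs p * Rabs p = p * p) by (rewrite <- Rabs_mult; apply Rabs_pos_eq; nra).
  assert (Hi : d * / d = 1) by (field; lra).
  assert (Hdd : 0 < / d) by (apply Rinv_0_lt_compat; lra).
  apply (Rmult_le_reg_l d); [lra|].
  replace (d * ((d * (p * p) + / d) / 2)) with ((d * d * (p * p) + d * / d) / 2) by (field; lra).
  rewrite Hi. rewrite <- Hp. nra.
Qed.

Lemma alg2 al A Amax Ainf d p q : 0 < al -> al <= A -> A <= Amax -> 0 < Ainf -> 0 < d ->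
  Rabs (p + / Ainf * (A * q)) <=
    (1 + Amax / Ainf) / 2 * (d * (2 / al) * (A * (q * q + p * p) / 2) + / d).
Proof.
  intros Hal HA HAm HAi Hd.
  set (X := (d * (2 / al) * (A * (q * q + p * p) / 2) + / d) / 2).
  assert (Hp2 : p * p <= 2 / al * (A * (q * q + p * p) / 2)).
  { replace (2 / al * (A * (q * q + p * p) / 2)) with (A * (q * q + p * p) / al) by (field; lra).
    apply (Rmult_le_reg_l al); [lra|]. replace (al * (A * (q * q + p * p) / al)) with (A * (q * q + p * p)) by (field; lra).
    assert (0 <= q * q) by nra. assert (0 <= p * p) by nra. nra. }
  assert (Hq2 : q * q <= 2 / al * (A * (q * q + p * p) / 2)).
  { replace (2 / al * (A * (q * q + p * p) / 2)) with (A * (q * q + p * p) / al) by (field; lra).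
    apply (Rmult_le_reg_l al); [lra|]. replace (al * (A * (q * q + p * p) / al)) with (A * (q * q + p * p)) by (field; lra).
    assert (0 <= q * q) by nra. assert (0 <= p * p) by nra. nra. }
  assert (HpX : Rabs p <= X).
  { eapply Rle_trans; [apply (amgm d p Hd)|]. unfold X.
    assert (d * (p * p) <= d * (2 / al * (A * (q * q + p * p) / 2))) by (apply Rmult_le_compat_l; lra).
    lra. }
  assert (HqX : Rabs q <= X).
  { eapply Rle_trans; [apply (amgm d q Hd)|]. unfold X.
    assert (d * (q * q) <= d * (2 / al * (A * (q * q + p * p) / 2))) by (apply Rmult_le_compat_l; lra).
    lra. }
  replace ((1 + Amax / Ainf) / 2 * (d * (2 / al) * (A * (q * q + p * p) / 2) + / d))
    with (X + Amax / Ainf * X) by (unfold X; field; lra).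
  eapply Rle_trans; [apply Rabs_triang|]. apply Rplus_le_compat; auto.
  rewrite Rabs_mult, Rabs_mult. rewrite (Rabs_pos_eq (/ Ainf)) by (left; apply Rinv_0_lt_compat; lra).
  rewrite (Rabs_pos_eq A) by lra.
  assert (HAi' : 0 < / Ainf) by (apply Rinv_0_lt_compat; lra).
  assert (0 <= Rabs q) by apply Rabs_pos.
  unfold Rdiv. replace (Amax * / Ainf * X) with (/ Ainf * (Amax * X)) by ring.
  apply Rmult_le_compat_l; [lra|]. apply Rmult_le_compat; lra.
Qed.

Lemma ptbound (A : R -> R) (U : R -> R -> R) (l Ainf al Amax : R) (HU : smooth2 U)
  (HAc : forall x, continuity_pt A x) (Hl : 0 < l) (Hal : 0 < al)
  (HAb : forall x, 0 <= x <= l -> al <= A x <= Amax) (HAi : 0 < Ainf) t d (Hd : 0 < d) :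
  Rabs (U l t - U 0 t + / Ainf * RInt (fun x => A x * Ut U x t) 0 l) <=
    (1 + Amax / Ainf) / 2 * (d * (2 / al) * Een A U l t + l / d).
Proof.
  assert (HUx : is_RInt (fun x => Ux U x t) 0 l (minus (U l t) (U 0 t))).
  { apply (is_RInt_derive (fun x => U x t)).
    - intros x _. apply (dX U HU nil).
    - intros x _. eapply is_derive_cont. apply (dX U HU (cons true nil)). }
  assert (HQc : forall z, continuous (fun x => A x * Ut U x t) z).
  { intros z. apply (c2d_to_cont2 (fun s x => A x * Ut U x s) t z). c2d_tac HU; auto. }
  assert (HQ : is_RInt (fun x => A x * Ut U x t) 0 l (RInt (fun x => A x * Ut U x t) 0 l)).
  { apply (@RInt_correct R_CompleteNormedModule). apply exRInt_R. auto. }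
  assert (Hg := is_RInt_plus _ _ _ _ _ _ HUx (is_RInt_scal _ _ _ (/ Ainf) _ HQ)).
  assert (Hg' := Hg). apply RInt_R in Hg'.
  assert (Heqv : U l t - U 0 t + / Ainf * RInt (fun x => A x * Ut U x t) 0 l =
     RInt (fun y => plus (Ux U y t) (scal (/ Ainf) (A y * Ut U y t))) 0 l).
  { symmetry. etransitivity; [apply Hg'|]. reflexivity. }
  rewrite Heqv.
  assert (HE : is_RInt (fun x => eint A U t x) 0 l (Een A U l t)).
  { apply (@RInt_correct R_CompleteNormedModule). apply exRInt_R. intros z. apply eint_cont; auto. }
  assert (Hr := is_RInt_scal _ _ _ ((1 + Amax / Ainf) / 2) _
                 (is_RInt_plus _ _ _ _ _ _ (is_RInt_scal _ _ _ (d * (2 / al)) _ HE)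
                    (is_RInt_const 0 l (/ d)))).
  assert (Hr' := Hr). apply RInt_R in Hr'.
  eapply Rle_trans. apply abs_RInt_le; [lra | eexists; exact Hg].
  apply Rle_trans with (RInt (fun y => scal ((1 + Amax / Ainf) / 2)
        (plus (scal (d * (2 / al)) (eint A U t y)) (/ d))) 0 l).
  2:{ right. etransitivity; [apply Hr'|]. unfold scal, plus; simpl. unfold mult, plus; simpl.
      field. lra. }
  apply RInt_le; [lra | | eexists; exact Hr |].
  - apply exRInt_R. intros z. apply (continuous_comp _ Rabs); [|apply continuous_Rabs].
    apply (continuous_plus (fun y => Ux U y t)).
    + eapply is_derive_cont. apply (dX U HU (cons true nil)).
    + apply (continuous_scal_r (/ Ainf) (fun y => A y * Ut U y t)). auto.
  - intros x Hx. unfold scal, plus; simpl. unfold mult, plus; simpl. unfold eint.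
    destruct (HAb x ltac:(lra)). apply alg2; auto.
Qed.

Lemma is_derive_val (f : R -> R) x l1 l2 : is_derive f x l1 -> l1 = l2 -> is_derive f x l2.
Proof. intros H E; subst; auto. Qed.

Theorem mainTheorem13 (A : R -> R) (Ainf l : R) (phi : R -> R) (u : R -> R -> R) :
  admissible A ->
  0 < l ->
  (forall x, l < x -> A x = Ainf) ->
  test_fun_pos phi ->
  smooth_half u ->
  (forall x t, 0 < x -> boxA A u x t = 0) ->
  (forall t, filterlim (fun h => (u h t - u 0 t) / h) (at_right 0) (locally (phi t))) ->
  (forall x t, 0 < x -> t < 0 -> u x t = 0) ->
  exists C C' : R, 0 < C /\ 0 < C' /\
    forall t : R,
      Rabs (u 0 t - (- (/ Ainf) * RInt phi 0 t)) <= C * exp (- C' * t).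
Proof.
  intros HA Hl HAl Hphi Hsm Hbox Hneu Hpast.
  destruct Hsm as [U [HU Heq]].
  destruct HA as [HAs [HApos [xm [xp [Ai' [Hxm [_ [_ [HA1 _]]]]]]]]].
  assert (HAd : forall x, ex_derive A x) by (intros x; exact (HAs 0%nat x)).
  assert (HA'd : forall x, ex_derive (Derive A) x) by (intros x; exact (HAs 1%nat x)).
  assert (HAc : forall x, continuity_pt A x).
  { intros x. apply continuity_pt_filterlim. exact (ex_derive_continuous A x (HAd x)). }
  assert (HA'c : forall x, continuity_pt (Derive A) x).
  { intros x. apply continuity_pt_filterlim. exact (ex_derive_continuous _ x (HA'd x)). }
  assert (HAinf : 0 < Ainf) by (rewrite <- (HAl (l + 1)) by lra; apply HApos).
  assert (HA0 : A 0 = 1) by (apply HA1; lra).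
  assert (HAlv : A l = Ainf).
  { apply right_cont_eq; auto. apply continuity_pt_filterlim; auto. }
  destruct Hphi as [Hps [a [b [Ha [Hab Hphi0]]]]].
  assert (Hphic : forall t, continuous phi t).
  { intros t. exact (ex_derive_continuous phi t (Hps 0%nat t)). }
  assert (Hw := wave_U A u U Heq HU HAd HApos Hbox).
  assert (Hn := neu_U phi u U Heq HU Hneu).
  assert (HpU : forall x t, 0 < x -> t < 0 -> U x t = 0).
  { intros x t Hx Ht. rewrite Heq by lra. auto. }
  assert (Hout := out_U A U Ainf l HU Hw HpU HApos Hl HAl).
  destruct (continuity_ab_min A 0 l ltac:(lra) (fun c _ => HAc c)) as [mn [Hmn Hmnb]].
  destruct (continuity_ab_maj A 0 l ltac:(lra) (fun c _ => HAc c)) as [mxA [HmxA HmxAb]].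
  assert (HRc : forall c, continuity_pt (fun x => Rabs (Derive A x)) c).
  { intros c. apply (continuity_pt_comp (Derive A) Rabs); [apply HA'c | apply Rcontinuity_abs]. }
  destruct (continuity_ab_maj (fun x => Rabs (Derive A x)) 0 l ltac:(lra) (fun c _ => HRc c)) as [mb [Hmb Hmbb]].
  set (al := A mn). set (Amax := A mxA). set (beta := Rabs (Derive A mb)).
  assert (Hal : 0 < al) by apply HApos.
  assert (Hbeta : 0 <= beta) by apply Rabs_pos.
  set (K := 1 + beta / al).
  assert (HK0 : 0 <= K).
  { unfold K. assert (0 <= beta / al) by (apply Rdiv_le_0_compat; lra). lra. }
  assert (HK : forall x, 0 <= x <= l -> A x + Rabs (Derive A x) <= K * A x).
  { intros x Hx. specialize (Hmn x Hx). specialize (Hmb x Hx). simpl in Hmb. fold al in Hmn. fold beta in Hmb.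
    unfold K. replace ((1 + beta / al) * A x) with (A x + beta * (A x / al)) by (field; lra).
    assert (1 <= A x / al).
    { apply (Rmult_le_reg_l al); [lra|]. replace (al * (A x / al)) with (A x) by (field; lra). lra. }
    nra. }
  set (c := exp (K * l)).
  assert (Hc : 0 < c) by apply exp_pos.
  assert (Hb0 : 0 <= b) by lra.
  destruct (abstract_decay (Een A U l) (Mfun K A U l)
     (fun t => RInt (fun x => deint A U t x) 0 l) (fun t => RInt (fun x => dmint K A U t x) 0 l) c b)
     as [k [Bc [Hk [HBc Hdec]]]].
  - intros t. apply dE; auto.
  - intros t. apply dM; auto.
  - intros t. apply E_nonneg; auto.
  - intros t. apply M_bound; auto.
  - exact Hc.
  - intros t Ht.
    rewrite (ibpE A U l HU HAd HA'c Hw Hl t).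
    assert (HM := Mineq K A U l HU HAd HA'c Hw HApos Hl HK0 HK t).
    assert (Ho := Hout l t (Rle_refl l)).
    rewrite HAlv, HA0, (Hn t), (Hphi0 t (or_intror Ht)) in *.
    fold c in HM. rewrite Rmult_0_r, exp_0 in HM.
    assert (Hx : Ux U l t = - Ut U l t) by lra. rewrite Hx in *.
    set (sq := Ut U l t * Ut U l t) in *.
    assert (Hsq : 0 <= sq) by (unfold sq; nra).
    assert (Hsq0 : 0 <= Ut U 0 t * Ut U 0 t) by nra.
    set (eps := / (2 * c)).
    assert (Heps : 0 < eps) by (unfold eps; apply Rinv_0_lt_compat; lra).
    assert (Hepsc : eps * c = / 2) by (unfold eps; field; lra).
    assert (HM' : RInt (fun x => dmint K A U t x) 0 l <= c * (Ainf * sq) - Een A U l t).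
    { eapply Rle_trans; [exact HM|].
      replace (- Ut U l t * - Ut U l t) with sq by (unfold sq; ring). lra. }
    apply (Rmult_le_compat_l eps) in HM'; [|lra].
    replace (eps * (c * (Ainf * sq) - Een A U l t)) with ((eps * c) * (Ainf * sq) - eps * Een A U l t) in HM' by ring.
    rewrite Hepsc in HM'.
    replace (Ainf * - Ut U l t * Ut U l t - 1 * 0 * Ut U 0 t) with (- (Ainf * sq)) by (unfold sq; ring).
    assert (0 <= Ainf * sq) by (apply Rmult_le_pos; lra). lra.
  - intros t Ht. unfold Een.
    transitivity (RInt (fun _ : R => 0) 0 l).
    + apply RInt_ext. intros x Hx. rewrite Rmin_left, Rmax_right in Hx by lra.
      destruct (past_U U HpU x t) as [E1 E2]; try lra. unfold eint. rewrite E1, E2. match goal with |- ?a = ?b => change (@eq R a b) end. lra.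
    + rewrite RInt_const. unfold scal; simpl. unfold mult; simpl. match goal with |- ?a = ?b => change (@eq R a b) end. ring.
  - exact Hb0.
  set (D := fun s => RInt (fun x => A x * Ut U x s) 0 l + Ainf * U l s + RInt phi 0 s).
  assert (HD : forall s, is_derive D s 0).
  { intros s. unfold D.
    assert (H1 := dQ A U l HU HAc s).
    assert (H2 : is_derive (fun s => Ainf * U l s) s (Ainf * Ut U l s)).
    { apply (is_derive_scal (fun s => U l s) s Ainf). apply (dT U HU nil). }
    assert (H3 : is_derive (fun s => RInt phi 0 s) s (phi s)).
    { apply (is_derive_RInt phi (fun s => RInt phi 0 s) 0 s); [|apply Hphic].
      apply filter_forall. intros y. apply (@RInt_correct R_CompleteNormedModule).
      apply exRInt_R. auto. }
    eapply is_derive_val.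
    - apply (is_derive_plus (fun s => RInt (fun x => A x * Ut U x s) 0 l + Ainf * U l s)
               (fun s => RInt phi 0 s)); [|exact H3].
      apply (is_derive_plus (fun s => RInt (fun x => A x * Ut U x s) 0 l) (fun s => Ainf * U l s)); [exact H1 | exact H2].
    - rewrite (ibpQ A U l HU HAd HA'c Hw Hl s).
      rewrite HAlv, HA0, Hn. assert (Ho := Hout l s (Rle_refl l)).
      unfold plus; simpl. simpl in Ho. assert (Ainf * (Dt U l s + Defs.Dx U l s) = 0) by (rewrite Ho; ring). lra. }
  assert (HDm1 : D (-1) = 0).
  { unfold D. rewrite (HpU l (-1)) by lra.
    assert (R1 : RInt (fun x => A x * Ut U x (-1)) 0 l = 0).
    { transitivity (RInt (fun _ : R => 0) 0 l).
      + apply RInt_ext. intros x Hx. rewrite Rmin_left, Rmax_right in Hx by lra.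
        destruct (past_U U HpU x (-1)) as [E1 E2]; try lra. rewrite E1. lra.
      + rewrite RInt_const. unfold scal; simpl. unfold mult; simpl. lra. }
    assert (R2 : RInt phi 0 (-1) = 0).
    { transitivity (RInt (fun _ : R => 0) 0 (-1)).
      + apply RInt_ext. intros x Hx. rewrite Rmin_right, Rmax_left in Hx by lra.
        apply Hphi0. left. lra.
      + rewrite RInt_const. unfold scal; simpl. unfold mult; simpl. lra. }
    rewrite R1, R2. ring. }
  assert (HDz : forall t, D t = 0).
  { intros t. destruct (MVT_gen D (-1) t (fun _ => 0)) as [c0 [_ Hc0]].
    - intros; apply HD.
    - intros; apply continuity_pt_filterlim; eapply is_derive_cont; apply HD.
    - lra. }
  set (C' := k / 2).
  exists ((1 + Amax / Ainf) / 2 * (2 / al * Bc + l) + 1), C'.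
  assert (HAmax : 0 < Amax) by apply HApos.
  assert (HC0 : 0 <= (1 + Amax / Ainf) / 2 * (2 / al * Bc + l)).
  { apply Rmult_le_pos.
    - assert (0 <= Amax / Ainf) by (apply Rdiv_le_0_compat; lra). lra.
    - assert (0 <= 2 / al * Bc) by (apply Rmult_le_pos; [apply Rdiv_le_0_compat|]; lra). lra. }
  split; [lra | split; [unfold C'; lra |]].
  intros t.
  set (d := exp (C' * t)).
  assert (Hd : 0 < d) by apply exp_pos.
  assert (HAb : forall x, 0 <= x <= l -> al <= A x <= Amax).
  { intros x Hx. split; [apply Hmn | apply HmxA]; auto. }
  assert (Hpt := ptbound A U l Ainf al Amax HU HAc Hl Hal HAb HAinf t d Hd).
  assert (Hrew : u 0 t - - / Ainf * RInt phi 0 t =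
     - (U l t - U 0 t + / Ainf * RInt (fun x => A x * Ut U x t) 0 l)).
  { rewrite <- Heq by lra. assert (HDt := HDz t). unfold D in HDt.
    replace (RInt phi 0 t) with (- (RInt (fun x => A x * Ut U x t) 0 l + Ainf * U l t)) by lra.
    field. lra. }
  rewrite Hrew, Rabs_Ropp. eapply Rle_trans; [exact Hpt|].
  assert (He1 : d * exp (- k * t) = exp (- C' * t)).
  { unfold d. rewrite <- exp_plus. f_equal. unfold C'. field. }
  assert (He2 : l / d = l * exp (- C' * t)).
  { unfold d. unfold Rdiv. f_equal. replace (- C' * t) with (- (C' * t)) by ring. rewrite exp_Ropp. auto. }
  assert (HEt := Hdec t).
  assert (Hx : 0 < exp (- C' * t)) by apply exp_pos.
  assert (HE0t : 0 <= Een A U l t) by (apply E_nonneg; auto).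
  assert (HF : d * (2 / al) * Een A U l t <= 2 / al * Bc * exp (- C' * t)).
  { rewrite <- He1. assert (0 < 2 / al) by (apply Rdiv_lt_0_compat; lra).
    replace (d * (2 / al) * Een A U l t) with ((2 / al) * d * Een A U l t) by ring.
    replace (2 / al * Bc * (d * exp (- k * t))) with ((2 / al) * d * (Bc * exp (- k * t))) by ring.
    apply Rmult_le_compat_l; [|auto]. apply Rmult_le_pos; lra. }
  rewrite He2.
  assert (HD0 : 0 <= (1 + Amax / Ainf) / 2).
  { assert (0 <= Amax / Ainf) by (apply Rdiv_le_0_compat; lra). lra. }
  apply Rle_trans with ((1 + Amax / Ainf) / 2 * (2 / al * Bc + l) * exp (- C' * t)).
  - replace ((1 + Amax / Ainf) / 2 * (2 / al * Bc + l) * exp (- C' * t))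
      with ((1 + Amax / Ainf) / 2 * (2 / al * Bc * exp (- C' * t) + l * exp (- C' * t))) by ring.
    apply Rmult_le_compat_l; lra.
  - apply Rmult_le_compat_r; lra.
Qed.
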